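(* Let $T\ge 2$ and $1\le k<\lceil T/2\rceil$; put $T_c=\lceil T/(2k-1)\rceil$ and $T_{\text{last}}=T-(2k-1)(T_c-1)$. For $j\in\{1,\dots,T_c-1\}$ let $\mathcal{P}_j$ be the set of distinct vectors among $\{\mathbf{0}_{2k-1},\mathbf{1}_{2k-1},\mathbf{e}^{2k-1}_1,\dots,\mathbf{e}^{2k-1}_{2k-1}\}\subseteq\mathbb{F}_2^{2k-1}$, and let $\mathcal{P}_{T_c}$ be the set of distinct vectors among $\{\mathbf{0}_{T_{\text{last}}},\mathbf{1}_{T_{\text{last}}},\mathbf{e}^{T_{\text{last}}}_1,\dots,\mathbf{e}^{T_{\text{last}}}_{T_{\text{last}}}\}\subseteq\mathbb{F}_2^{T_{\text{last}}}$. Let $\mathbf{P}$ be the matrix whose rows are all concatenations $(\mathbf{v}_1,\mathbf{v}_2,\dots,\mathbf{v}_{T_c})\in\mathbb{F}_2^T$ with $\mathbf{v}_j\in\mathcal{P}_j$ for each $j$ (one row per element of $\mathcal{P}_1\times\cdots\times\mathcal{P}_{T_c}$). Then $\mathbf{P}$ has $\prod_{j=1}^{T_c}|\mathcal{P}_j|$ rows, which equals $2^T$ if $k=1$, $2(2k+1)^{T_c-1}$ if $k\ne1$ and $T_{\text{last}}=1$, and $(2k+1)^{T_c-1}(T_{\text{last}}+2)$ otherwise; and every vector of $\mathbb{F}_2^T$ is the sum over $\mathbb{F}_2$ of at most $k$ rows of $\mathbf{P}$.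
   Context: $\mathbf{0}_j$ and $\mathbf{1}_j$ denote the all-zero and all-ones row vectors of length $j$, and $\mathbf{e}^j_i$ is the length-$j$ row vector with a single $1$ in position $i$. *)

(* Defs.v *)
From HB Require Import structures.
From mathcomp Require Import all_boot all_order all_algebra.
Set Implicit Arguments. Unset Strict Implicit. Unset Printing Implicit Defensive.
Import GRing.Theory.
Local Open Scope ring_scope.

Definition ceil_div (a b : nat) : nat := ((a + b.-1) %/ b)%N.

Definition blen (k : nat) : nat := (2 * k - 1)%N.
Definition Tc (T k : nat) : nat := ceil_div T (blen k).
Definition Tlast (T k : nat) : nat := (T - blen k * (Tc T k).-1)%N.

(* size of block j (0-indexed, j = 0 .. Tc-1): 2k-1 for j < Tc-1, T_last for the last *)
Definition blk_size (T k j : nat) : nat :=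
  if (j.+1 < Tc T k)%N then blen k else Tlast T k.

Definition Pset (n : nat) : {set 'rV['F_2]_n} :=
  (0 : 'rV['F_2]_n) |: (const_mx 1 |: [set delta_mx 0 i | i : 'I_n]).

(* P_{j+1} (0-indexed j) *)
Definition Pblk (T k j : nat) : {set 'rV['F_2]_(blk_size T k j)} :=
  Pset (blk_size T k j).

(* entry at nat position m of v (0 outside range) *)
Definition entry (T : nat) (v : 'rV['F_2]_T) (m : nat) : 'F_2 :=
  if insub m is Some i then v 0 i else 0.

Definition block (T k : nat) (v : 'rV['F_2]_T) (j : nat) : 'rV['F_2]_(blk_size T k j) :=
  \row_(i < blk_size T k j) entry v (blen k * j + i).

(* rows of P: the concatenations (v_1, ..., v_{T_c}) with v_j in P_j,
   i.e. the vectors of F_2^T whose j-th block lies in P_j for every j *)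
Definition Prows (T k : nat) : {set 'rV['F_2]_T} :=
  [set v | [forall j : 'I_(Tc T k), block k v j \in Pblk T k j]].

Definition row_count (T k : nat) : nat :=
  if k == 1%N then (2 ^ T)%N
  else if Tlast T k == 1%N then (2 * (2 * k + 1) ^ (Tc T k).-1)%N
  else ((2 * k + 1) ^ (Tc T k).-1 * (Tlast T k + 2))%N.

(* Main.v *)
Require Import Defs.
From HB Require Import structures.
From mathcomp Require Import all_boot all_order all_algebra.
From mathcomp Require Import zify.
Import GRing.Theory.
Set Implicit Arguments. Unset Strict Implicit.

Lemma blen_gt0 k : (0 < k)%N -> (0 < blen k)%N.
Proof. rewrite /blen; lia. Qed.

Lemma Tc_bounds T k : (0 < k)%N -> (0 < T)%N ->
  (blen k * (Tc T k).-1 < T <= blen k * Tc T k)%N.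
Proof.
move=> hk hT; have hb := blen_gt0 hk.
rewrite /Tc /ceil_div; set b := blen k in hb *.
have := divn_eq (T + b.-1) b; have := ltn_pmod (T + b.-1) hb.
set q := (_ %/ _)%N; set r := (_ %% _)%N => *; nia.
Qed.

Lemma Tlast_bounds T k : (0 < k)%N -> (0 < T)%N ->
  (0 < Tlast T k <= blen k)%N /\ (0 < Tc T k)%N.
Proof.
move=> hk hT; have := Tc_bounds hk hT; have := blen_gt0 hk.
rewrite /Tlast; set b := blen k; set c := Tc T k => *; nia.
Qed.

Lemma blk_le T k j : (0 < k)%N -> (0 < T)%N -> (blk_size T k j <= blen k)%N.
Proof.
move=> hk hT; rewrite /blk_size; case: ifP => // _.
by case: (Tlast_bounds hk hT) => /andP[].
Qed.

Lemma posA T k (j : nat) i : (0 < k)%N -> (0 < T)%N -> (j < Tc T k)%N ->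
  (i < blk_size T k j)%N -> (blen k * j + i < T)%N.
Proof.
move=> hk hT hj; have := Tc_bounds hk hT; have := blen_gt0 hk.
rewrite /blk_size /Tlast; set b := blen k; set c := Tc T k.
case: ifP => H *; nia.
Qed.

Lemma posB T k m : (0 < k)%N -> (0 < T)%N -> (m < T)%N ->
  (m %/ blen k < Tc T k)%N /\ (m %% blen k < blk_size T k (m %/ blen k))%N.
Proof.
move=> hk hT hm; have := Tc_bounds hk hT; have hb := blen_gt0 hk.
have := divn_eq m (blen k); have := ltn_pmod m hb.
rewrite /blk_size /Tlast; set b := blen k; set c := Tc T k.
set q := (_ %/ _)%N; set r := (_ %% _)%N.
case: ifP => H *; split; nia.
Qed.

Lemma divmodA b j i : (0 < b)%N -> (i < b)%N ->
  ((b * j + i) %/ b = j)%N /\ ((b * j + i) %% b = i)%N.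
Proof.
move=> hb hi; rewrite mulnC divnMDl // modnMDl divn_small // modn_small //.
by rewrite addn0.
Qed.
Local Open Scope ring_scope.

Lemma F2_cases (a : 'F_2) : a = 0 \/ a = 1.
Proof. case: a => [[|[|n]] H] //=; [left|right]; apply/val_inj => //. Qed.
Lemma F2_11 : (1 + 1 : 'F_2) = 0. Proof. by apply/val_inj. Qed.
Lemma F2_10 : (1 : 'F_2) != 0. Proof. by []. Qed.

Lemma delta_inj n : injective (fun i : 'I_n => delta_mx (0 : 'I_1) i : 'rV['F_2]_n).
Proof.
move=> i j /(congr1 (fun M : 'rV['F_2]_n => M 0 i)); rewrite !mxE !eqxx /=.
by case: eqP => // _ /eqP; rewrite eq_sym oner_eq0.
Qed.

Lemma card_Pset n : (0 < n)%N -> #|Pset n| = (if n == 1%N then 2 else n + 2)%N.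
Proof.
move=> hn; rewrite /Pset.
set D := [set _ | _ in _].
have cD : #|D| = n by rewrite card_imset ?card_ord //; apply: delta_inj.
have z1 : (0 : 'rV['F_2]_n) != const_mx 1.
  apply/eqP => /(congr1 (fun M : 'rV['F_2]_n => M 0 (Ordinal hn))).
  by rewrite !mxE => /eqP; rewrite eq_sym oner_eq0.
have zD : (0 : 'rV['F_2]_n) \notin D.
  apply/imsetP => -[i _] /(congr1 (fun M : 'rV['F_2]_n => M 0 i)).
  by rewrite !mxE !eqxx => /eqP; rewrite eq_sym oner_eq0.
rewrite cardsU1 in_setU1 negb_or z1 zD /= cardsU1 cD.
case: eqP => [n1|/eqP nn1].
  subst n; suff -> : const_mx 1 \in D by [].
  apply/imsetP; exists ord0 => //; apply/matrixP => i j.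
  by rewrite !mxE !ord1 !eqxx.
have -> : (const_mx 1 \notin D) = true.
2: by rewrite /=; lia.
apply/negP => /imsetP [i _].
have [j hj] : exists j : 'I_n, j != i.
  case: (altP (val i =P 0%N)) => hi.
    have h1 : (1 < n)%N by lia.
    by exists (Ordinal h1); apply/eqP => /(congr1 val) /=; rewrite hi.
  by exists (Ordinal hn); apply/eqP => /(congr1 val) /= h; move: hi; rewrite /= -h.
move=> /(congr1 (fun M : 'rV['F_2]_n => M 0 j)); rewrite !mxE (negbTE hj) /=.
by move/eqP; rewrite oner_eq0.
Qed.

Lemma sum_delta n (A : {set 'I_n}) l :
  (\sum_(i in A) delta_mx (0 : 'I_1) i : 'rV['F_2]_n) 0 l = (l \in A)%:R.
Proof.
rewrite summxE.
under eq_bigr => i _ do rewrite mxE eqxx /=.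
case: (boolP (l \in A)) => hl.
  rewrite (bigD1 l) //= eqxx big1 ?addr0 // => i /andP[_ hi].
  by rewrite eq_sym (negbTE hi).
by rewrite big1 // => i hi; case: eqP hl => // ->; rewrite hi.
Qed.

Lemma cover_blk n k (y : 'rV['F_2]_n) : (n <= 2 * k - 1)%N ->
  exists s : seq 'rV['F_2]_n,
    [/\ (size s <= k)%N, all (fun r => r \in Pset n) s & \sum_(r <- s) r = y].
Proof.
move=> hn.
set S := [set i | y 0 i != 0].
have DinP i : delta_mx (0 : 'I_1) i \in Pset n.
  by rewrite /Pset !inE; apply/orP; right; apply/orP; right; apply/imsetP; exists i.
have allD (A : {set 'I_n}) : all (fun r => r \in Pset n) [seq delta_mx (0 : 'I_1) i | i <- enum A].
  by apply/allP => r /mapP[i _ ->].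
have sumD (A : {set 'I_n}) : \sum_(r <- [seq delta_mx (0 : 'I_1) i | i <- enum A]) r
     = \sum_(i in A) delta_mx (0 : 'I_1) i.
  by rewrite big_map big_enum.
have cSC := cardsC S; rewrite card_ord in cSC.
case: (leqP #|S| k) => hS.
  exists [seq delta_mx 0 i | i <- enum S]; split => //.
    by rewrite size_map -cardE.
  rewrite sumD; apply/matrixP => i l; rewrite ord1 sum_delta inE.
  by case: (F2_cases (y 0 l)) => ->.
exists (const_mx 1 :: [seq delta_mx 0 i | i <- enum (~: S)]); split.
- rewrite /= size_map -cardE; lia.
- by rewrite /= allD andbT /Pset !inE eqxx orbT.
- rewrite big_cons sumD; apply/matrixP => i l; rewrite ord1 mxE sum_delta mxE !inE.
  by case: (F2_cases (y 0 l)) => -> //=; rewrite ?F2_11 ?addr0.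
Qed.

Definition gl T k (F : forall j : 'I_(Tc T k), 'rV['F_2]_(blk_size T k j)) (j i : nat) : 'F_2 :=
  match (insub j : option 'I_(Tc T k)) with Some jj => entry (F jj) i | None => 0 end.
Definition mk T k F : 'rV['F_2]_T := \row_(m < T) @gl T k F (m %/ blen k) (m %% blen k).

Lemma entry_ord n (v : 'rV['F_2]_n) (i : 'I_n) : entry v i = v 0 i.
Proof. by rewrite /entry valK. Qed.
Lemma entry_lt n (v : 'rV['F_2]_n) m (h : (m < n)%N) : entry v m = v 0 (Ordinal h).
Proof. by rewrite /entry insubT. Qed.
Lemma gl_lt T k F j i (h : (j < Tc T k)%N) : @gl T k F j i = entry (F (Ordinal h)) i.
Proof. by rewrite /gl insubT. Qed.
Lemma gl_ord T k F (j : 'I_(Tc T k)) i : @gl T k F j i = entry (F j) i.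
Proof. by rewrite /gl valK. Qed.

Section S.
Variables (T k : nat) (hk : (0 < k)%N) (hT : (0 < T)%N).

Lemma blockK F (j : 'I_(Tc T k)) : block k (@mk T k F) j = F j.
Proof.
apply/matrixP => a i; rewrite ord1 [LHS]mxE.
have hi := ltn_ord i.
rewrite (entry_lt _ (posA hk hT (ltn_ord j) hi)) mxE.
have hb := blen_gt0 hk.
have [-> ->] := divmodA (val j) hb (leq_trans hi (blk_le j hk hT)).
by rewrite gl_ord entry_ord.
Qed.

Lemma block_inj (v w : 'rV['F_2]_T) :
  (forall j : 'I_(Tc T k), block k v j = block k w j) -> v = w.
Proof.
move=> H; apply/matrixP => a m; rewrite ord1.
have [hj hi] := posB hk hT (ltn_ord m).
have := congr1 (fun M : 'rV['F_2]_(blk_size T k (m %/ blen k)) => M 0 (Ordinal hi)) (H (Ordinal hj)).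
rewrite !mxE /= (_ : (blen k * (m %/ blen k) + m %% blen k)%N = m) ?entry_ord //.
by rewrite mulnC -divn_eq.
Qed.

Lemma card_Prows : #|Prows T k| = (\prod_(j < Tc T k) #|Pblk T k j|)%N.
Proof.
pose fT := {dffun forall j : 'I_(Tc T k), 'rV['F_2]_(blk_size T k j)}.
pose F := fun (j : 'I_(Tc T k)) (v : 'rV['F_2]_(blk_size T k j)) => v \in Pblk T k j.
pose M := fun f : fT => @mk T k (fun j => f j).
have Minj : injective M.
  move=> f g H; apply/ffunP => j.
  by have := congr1 (fun v => block k v j) H; rewrite /M !blockK.
have -> : Prows T k = M @: [set f : fT | f \in family F].
  apply/setP => v; apply/idP/idP.
    rewrite inE => /forallP Hv; apply/imsetP.
    exists (finfun (fun j : 'I_(Tc T k) => block k v j) : fT).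
      by rewrite inE; apply/familyP => j; rewrite ffunE; apply: Hv.
    by apply: block_inj => j; rewrite blockK ffunE.
  move=> /imsetP [f]; rewrite inE => /familyP Hf ->.
  by rewrite inE; apply/forallP => j; rewrite blockK; apply: Hf.
rewrite card_imset // cardsE card_family foldrE big_image /=.
by apply: eq_bigr => j _; apply: eq_card => v.
Qed.

Lemma prod_count : (\prod_(j < Tc T k) #|Pblk T k j|)%N = row_count T k.
Proof.
have [[/andP [hL0 hLb] hc]] := Tlast_bounds hk hT.
have hb := blen_gt0 hk.
have -> : (\prod_(j < Tc T k) #|Pblk T k j|)%N =
   (\prod_(j < Tc T k) (if blk_size T k j == 1%N then 2 else blk_size T k j + 2))%N.
  apply: eq_bigr => j _; rewrite /Pblk card_Pset //.
  rewrite /blk_size; case: ifP => //.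
rewrite /row_count.
case Ec: (Tc T k) hc => [//|c'] _.
rewrite big_ord_recr /=.
have -> : blk_size T k c' = Tlast T k by rewrite /blk_size Ec ltnn.
rewrite (eq_bigr (fun _ => if blen k == 1%N then 2 else blen k + 2)%N); last first.
  by move=> j _; rewrite /blk_size Ec /= ltnS ltn_ord.
rewrite prod_nat_const card_ord /=.
have -> : (blen k == 1%N) = (k == 1%N) by rewrite /blen; lia.
case: eqP => [k1|/eqP k1].
  rewrite k1 in hLb hL0 Ec *; have b1 : blen 1 = 1%N by [].
  rewrite b1 in hLb; have -> : Tlast T 1 = 1%N by lia.
  have : Tc T 1 = T by rewrite /Tc /ceil_div b1 addn0 divn1.
  by rewrite Ec => <-; rewrite expnSr.
have -> : (blen k + 2 = 2 * k + 1)%N by rewrite /blen; lia.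
by case: eqP => _ //; rewrite mulnC.
Qed.

Lemma cover_all (x : 'rV['F_2]_T) :
  exists s : seq 'rV['F_2]_T,
    [/\ (size s <= k)%N, all (fun r => r \in Prows T k) s
      & (\sum_(r <- s) r)%R = x].
Proof.
have ex : forall j : 'I_(Tc T k), exists s : seq 'rV['F_2]_(blk_size T k j),
    [&& size s == k, all (fun r => r \in Pblk T k j) s & \sum_(r <- s) r == block k x j].
  move=> j.
  have hbl : (blk_size T k j <= 2 * k - 1)%N by apply: blk_le.
  have [s [hs hall hsum]] := cover_blk (block k x j) hbl.
  exists (s ++ nseq (k - size s) 0); apply/and3P; split.
  - by rewrite size_cat size_nseq; apply/eqP; lia.
  - rewrite all_cat hall /=; apply/allP => r /nseqP [-> _].
    by rewrite /Pblk /Pset !inE eqxx.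
  - rewrite big_cat /= hsum big1_seq ?addr0 // => r /andP[_ /nseqP [-> _]] //.
pose sel j := xchoose (ex j).
have selP j := xchooseP (ex j).
pose R t := @mk T k (fun j => nth 0 (sel j) t).
exists (mkseq R k); split.
- by rewrite size_mkseq.
- apply/allP => r /mapP [t]; rewrite mem_iota add0n => /andP[_ ht] ->.
  rewrite inE; apply/forallP => j; rewrite blockK.
  have /and3P [/eqP hs hall _] := selP j.
  by apply: (allP hall); apply: mem_nth; rewrite hs.
- apply/matrixP => a m; rewrite ord1 summxE /mkseq big_map.
  have [hj hi] := posB hk hT (ltn_ord m).
  under eq_bigr => t _ do rewrite /R mxE (gl_lt _ _ hj) (entry_lt _ hi).
  have /and3P [/eqP hs _ /eqP hsum] := selP (Ordinal hj).
  rewrite -summxE.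
  have -> : \sum_(t <- iota 0 k) nth 0 (sel (Ordinal hj)) t = block k x (Ordinal hj).
    by rewrite -hsum [RHS](big_nth 0) hs /index_iota subn0.
  rewrite mxE /= (_ : (blen k * (m %/ blen k) + m %% blen k)%N = m) ?entry_ord //.
  by rewrite mulnC -divn_eq.
Qed.
End S.

Close Scope ring_scope.

Theorem mainTheorem6 (T k : nat) (hT : (2 <= T)%N) (hk1 : (1 <= k)%N)
    (hk2 : (k < ceil_div T 2)%N) :
  [/\ #|Prows T k| = (\prod_(j < Tc T k) #|Pblk T k j|)%N,
      (\prod_(j < Tc T k) #|Pblk T k j|)%N = row_count T k
    & forall x : 'rV['F_2]_T,
        exists s : seq 'rV['F_2]_T,
          [/\ (size s <= k)%N, all (fun r => r \in Prows T k) s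
            & (\sum_(r <- s) r)%R = x]].
Proof.
have hT0 : (0 < T)%N by apply: leq_trans hT.
split.
- exact: card_Prows.
- exact: prod_count.
- exact: cover_all.
Qed.
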